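(* Let $k,n\in\mathbb{N}$, let $p_0,\dots,p_k$ be positive reals summing to $1$, and let $\boldsymbol{X}=[X_0,\dots,X_k]^\top$ have the multinomial distribution $\Pr\{\boldsymbol{X}=\boldsymbol{x}\}=\frac{n!}{\prod_{i=0}^kx_i!}\prod_{i=0}^kp_i^{x_i}$ for nonnegative integers $x_i$ with $\sum_ix_i=n$. Let $\mu_i=np_i$, $\boldsymbol{\mu}=[\mu_0,\dots,\mu_k]^\top$, and let $z_0,\dots,z_k$ be nonnegative integers with $\sum_{i=0}^kz_i=n$, $\boldsymbol{z}=[z_0,\dots,z_k]^\top$. Then $$\Pr\{\boldsymbol{X}\boldsymbol{\prec}\boldsymbol{z}\}\le\prod_{i=0}^k\Big(\frac{\mu_i}{z_i}\Big)^{z_i}\ \text{ if }\boldsymbol{z}\boldsymbol{\prec}\boldsymbol{\mu},\qquad \Pr\{\boldsymbol{X}\boldsymbol{\succ}\boldsymbol{z}\}\le\prod_{i=0}^k\Big(\frac{\mu_i}{z_i}\Big)^{z_i}\ \text{ if }\boldsymbol{z}\boldsymbol{\succ}\boldsymbol{\mu}.$$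
   Context: For vectors $\boldsymbol{x}=[x_0,\dots,x_k]^\top,\boldsymbol{y}=[y_0,\dots,y_k]^\top$, $\boldsymbol{x}\boldsymbol{\prec}\boldsymbol{y}$ means $x_i\le y_i$ for $i=1,\dots,k$ (index $0$ is not compared), and $\boldsymbol{x}\boldsymbol{\succ}\boldsymbol{y}$ means $x_i\ge y_i$ for $i=1,\dots,k$. The convention $0^0=1$ is used. *)

(* Defs.v *)
From mathcomp Require Import all_boot all_order all_algebra.
Set Implicit Arguments. Unset Strict Implicit. Unset Printing Implicit Defensive.
Import Order.TTheory GRing.Theory Num.Theory.
Local Open Scope ring_scope.

Definition multinomial_pmf (R : realFieldType) (k n : nat) (p : 'I_k.+1 -> R)
    (x : 'I_k.+1 -> nat) : R :=
  if (\sum_(i < k.+1) x i)%N == n then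
    (n`!)%:R / (\prod_(i < k.+1) ((x i)`!)%:R) * \prod_(i < k.+1) p i ^+ x i
  else 0.

(* Probability of an event A on outcomes; every outcome in the support has
   coordinates in {0,...,n}, so summing over {ffun 'I_k.+1 -> 'I_n.+1}
   enumerates the whole support. *)
Definition multinomial_prob (R : realFieldType) (k n : nat) (p : 'I_k.+1 -> R)
    (A : ('I_k.+1 -> nat) -> bool) : R :=
  \sum_(x : {ffun 'I_k.+1 -> 'I_n.+1} | A (fun i => nat_of_ord (x i)))
     multinomial_pmf n p (fun i => nat_of_ord (x i)).

Definition vprec (R : realFieldType) (k : nat) (x y : 'I_k.+1 -> R) : Prop :=
  forall i : 'I_k.+1, (0 < i)%N -> x i <= y i.
Definition vsucc (R : realFieldType) (k : nat) (x y : 'I_k.+1 -> R) : Prop :=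
  forall i : 'I_k.+1, (0 < i)%N -> y i <= x i.

Definition natvec (R : realFieldType) (k : nat) (x : 'I_k.+1 -> nat) : 'I_k.+1 -> R :=
  fun i => (x i)%:R.

Definition vprecn (k : nat) (x y : 'I_k.+1 -> nat) : bool :=
  [forall i : 'I_k.+1, (0 < i)%N ==> (x i <= y i)%N].
Definition vsuccn (k : nat) (x y : 'I_k.+1 -> nat) : bool :=
  [forall i : 'I_k.+1, (0 < i)%N ==> (y i <= x i)%N].

(* Main.v *)
Require Import Defs.
From mathcomp Require Import all_boot all_order all_algebra.
From mathcomp Require Import zify ring lra.
Import Order.TTheory GRing.Theory Num.Theory.
Set Implicit Arguments. Unset Strict Implicit.
Local Open Scope ring_scope.

Section M.
Variable R : realFieldType.

Definition pmfK (K N : nat) (q : 'I_K -> R) (x : 'I_K -> nat) : R :=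
  if (\sum_(i < K) x i)%N == N then
    (N`!)%:R / (\prod_(i < K) ((x i)`!)%:R) * \prod_(i < K) q i ^+ x i
  else 0.

Definition consf (T : finType) K (a : T) (f : {ffun 'I_K -> T}) : {ffun 'I_K.+1 -> T} :=
  [ffun i => if unlift ord0 i is Some j then f j else a].

Definition unconsf (T : finType) K (x : {ffun 'I_K.+1 -> T}) : T * {ffun 'I_K -> T} :=
  (x ord0, [ffun j => x (lift ord0 j)]).

Lemma consf_bij (T : finType) K : bijective (fun p : T * {ffun 'I_K -> T} => @consf T K p.1 p.2).
Proof.
exists (@unconsf T K).
- case=> a f /=; rewrite /unconsf /consf ffunE unlift_none; congr pair.
  by apply/ffunP=> j; rewrite !ffunE liftK.
- move=> x; rewrite /unconsf /consf /=; apply/ffunP=> i; rewrite !ffunE.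
  case: unliftP => [j ->|->] //; by rewrite ffunE.
Qed.

Lemma consf0 (T : finType) K (a : T) f : @consf T K a f ord0 = a.
Proof. by rewrite /consf ffunE unlift_none. Qed.
Lemma consfS (T : finType) K (a : T) f i : @consf T K a f (lift ord0 i) = f i.
Proof. by rewrite /consf ffunE liftK. Qed.

Lemma pmfK_ext K N (q : 'I_K -> R) x y : x =1 y -> pmfK N q x = pmfK N q y.
Proof.
move=> h; rewrite /pmfK (eq_bigr _ (fun i _ => h i)).
by under [X in _ / X]eq_bigr do rewrite h; under [X in _ * X]eq_bigr do rewrite h.
Qed.

Lemma pmfK_cons K N (q : 'I_K.+1 -> R) (a : nat) (x : 'I_K -> nat) :
  pmfK N q (fun i => if unlift ord0 i is Some j then x j else a) =
  if (a <= N)%N then 'C(N, a)%:R * q ord0 ^+ a * pmfK (N - a) (fun i => q (lift ord0 i)) x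
  else 0.
Proof.
rewrite /pmfK !big_ord_recl /= unlift_none.
under eq_bigr do rewrite liftK.
under [X in _ / (_ * X)]eq_bigr do rewrite liftK.
under [X in _ * (_ * X)]eq_bigr do rewrite liftK.

case: leqP => haN; last first.
  by case: eqP => // h; move: haN; rewrite -h; lia.
have -> : ((a + \sum_(i < K) x i)%N == N) = ((\sum_(i < K) x i)%N == (N - a)%N).
  by apply/eqP/eqP; lia.
case: eqP => _; last by rewrite mulr0.
have hP : 0 < \prod_(i < K) ((x i)`!)%:R :> R.
  by apply: prodr_gt0 => i _; rewrite ltr0n fact_gt0.
have hA : ((a`!)%:R : R) != 0 by rewrite pnatr_eq0 -lt0n fact_gt0.
rewrite -(bin_fact haN) !natrM.
field.
by rewrite hA /= gt_eqF.
Qed.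

Lemma multinom K m N (q : 'I_K -> R) : (N <= m)%N ->
  \sum_(x : {ffun 'I_K -> 'I_m.+1}) pmfK N q (fun i => nat_of_ord (x i))
  = (\sum_(i < K) q i) ^+ N.
Proof.
elim: K N q => [|K IH] N q hN.
  rewrite big_ord0 expr0n /pmfK.
  under eq_bigr do rewrite !big_ord0.
  rewrite sumr_const card_ffun card_ord /=.
rewrite card_ord expn0 mulr1n.
  by case: N {hN} => [|N] //=; rewrite divr1 mulr1.
rewrite (reindex _ (onW_bij _ (@consf_bij _ K))) /=.
rewrite -(pair_big predT predT (fun a f => pmfK N q (fun i => nat_of_ord (@consf _ K a f i)))) /=.
rewrite [in RHS]big_ord_recl [in RHS]addrC exprDn.
rewrite (big_ord_widen _ (fun i : nat => (\sum_(i < K) q (lift ord0 i)) ^+ (N - i) * q ord0 ^+ i *+ 'C(N, i)) (_ : N.+1 <= m.+1)%N) // big_mkcond /=.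
rewrite [RHS]big_mkcond /=.
apply: eq_bigr => a _.
under eq_bigr => j _.
  rewrite (@pmfK_ext _ _ _ _ (fun i => if unlift ord0 i is Some j' then nat_of_ord (j j') else nat_of_ord a)); last first.
    by move=> i; rewrite /consf ffunE; case: unlift.
  rewrite pmfK_cons.
  over.

rewrite ltnS; case: (leqP a N) => haN /=.
2: by rewrite big1_eq.
rewrite -mulr_sumr IH; last by lia.
by rewrite -mulr_natr; ring.
Qed.

Lemma pmfK_ge0 K N (q : 'I_K -> R) x : (forall i, 0 <= q i) -> 0 <= pmfK N q x.
Proof.
move=> hq; rewrite /pmfK; case: eqP => // _.
apply: mulr_ge0; last by apply: prodr_ge0 => i _; apply: exprn_ge0.
apply: divr_ge0 => //; apply: prodr_ge0 => i _; exact: ler0n.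
Qed.

Lemma gen_bound k n (p : 'I_k.+1 -> R) (hp : forall i, 0 < p i)
   (z : 'I_k.+1 -> nat) (c : 'I_k.+1 -> R) (B : R)
   (hc : forall i, 0 <= c i) (hB : 0 <= B)
   (hcB : (\prod_(i < k.+1) c i ^+ z i) * B = 1)
   (A : ('I_k.+1 -> nat) -> bool)
   (hA : forall x : 'I_k.+1 -> nat, (\sum_(i < k.+1) x i)%N = n -> A x ->
        forall i, c i ^+ z i <= c i ^+ x i) :
  multinomial_prob n p A <= B * (\sum_(i < k.+1) p i * c i) ^+ n.
Proof.
rewrite -(multinom _ (leqnn n)) mulr_sumr /multinomial_prob.
have hq : forall i, 0 <= p i * c i by move=> i; apply: mulr_ge0 => //; apply: ltW.
apply: le_trans (_ : \sum_(x : {ffun 'I_k.+1 -> 'I_n.+1} | A (fun i => nat_of_ord (x i)))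
     B * pmfK n (fun i => p i * c i) (fun i => nat_of_ord (x i)) <= _).
  apply: ler_sum => x Ax.
  rewrite /multinomial_pmf /pmfK; case: eqP => hs; last by rewrite mulr0.
  under [X in _ <= _ * (_ * X)]eq_bigr do rewrite exprMn.
  have E : forall a b d e : R, b * (a * (d * e)) = (a * d) * (b * e) by move=> *; ring.
  rewrite big_split /= E.
  set M := _ * \prod_(i < k.+1) _.
  have hM : 0 <= M.
    apply: mulr_ge0; last by apply: prodr_ge0 => i _; apply: exprn_ge0; apply: ltW.
    apply: divr_ge0 => //; apply: prodr_ge0 => i _; exact: ler0n.
  apply: ler_peMr => //.
  rewrite -[X in X <= _]hcB [X in _ <= X]mulrC; apply: ler_wpM2r => //.
  apply: ler_prod => i _; rewrite exprn_ge0 //=.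
  exact: (hA _ hs Ax).
rewrite [X in _ <= X](bigID (fun x : {ffun 'I_k.+1 -> 'I_n.+1} => A (fun i => nat_of_ord (x i)))) /=.
rewrite lerDl; apply: sumr_ge0 => x _; apply: mulr_ge0 => //; exact: pmfK_ge0.
Qed.


Lemma le_sum1 K (f : 'I_K -> nat) i : (f i <= \sum_(j < K) f j)%N.
Proof. by rewrite (bigD1 i) //= leq_addr. Qed.

End M.

Unset Implicit Arguments.
Set Strict Implicit.

Theorem corollary1 (R : realFieldType) (k n : nat) (p : 'I_k.+1 -> R)
    (hp : forall i, 0 < p i) (hsum : \sum_(i < k.+1) p i = 1)
    (z : 'I_k.+1 -> nat) (hz : (\sum_(i < k.+1) z i)%N = n) :
  let mu : 'I_k.+1 -> R := fun i => n%:R * p i in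
  let bound : R := \prod_(i < k.+1) (mu i / (z i)%:R) ^+ z i in
  (vprec (natvec R z) mu ->
     multinomial_prob n p (fun x => vprecn x z) <= bound) /\
  (vsucc (natvec R z) mu ->
     multinomial_prob n p (fun x => vsuccn x z) <= bound).
Proof.
move=> mu bound.
pose c i := (z i)%:R / mu i.
have hmu0 : forall i, 0 <= mu i by move=> i; apply: mulr_ge0 => //; apply: ltW.
have hmupos : (0 < n)%N -> forall i, 0 < mu i.
  by move=> hn i; apply: mulr_gt0; rewrite ?ltr0n.
have hc : forall i, 0 <= c i by move=> i; apply: divr_ge0.
have hB : 0 <= bound.
  by apply: prodr_ge0 => i _; apply: exprn_ge0; apply: divr_ge0.
have hcB : \prod_(i < k.+1) c i ^+ z i * bound = 1.
  rewrite /bound -big_split /=; apply: big1 => i _.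
  rewrite -exprMn; case hzi: (z i) => [|m]; first by rewrite expr0.
  have hn : (0 < n)%N by rewrite -hz; apply: leq_trans (le_sum1 z i); rewrite hzi.
  have := hmupos hn i; rewrite /c hzi => hm.
  rewrite (_ : _ * _ = 1) ?expr1n // mulrA divfK ?gt_eqF // divff //.
  by rewrite pnatr_eq0.
have hsum1 : (\sum_(i < k.+1) p i * c i) ^+ n = 1.
  case: (posnP n) => [-> | hn]; first by rewrite expr0.
  rewrite (_ : \sum_(i < k.+1) p i * c i = 1) ?expr1n //.
  rewrite (eq_bigr (fun i => (z i)%:R / n%:R)); last first.
    move=> i _; rewrite /c /mu; field.
    by rewrite pnatr_eq0 -lt0n hn /= gt_eqF.
  by rewrite -mulr_suml -natr_sum hz divff // pnatr_eq0 -lt0n.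
have hsmu : \sum_(i < k.+1) mu i = n%:R by rewrite /mu -mulr_sumr hsum mulr1.
have hsz : \sum_(i < k.+1) (z i)%:R = n%:R :> R by rewrite -natr_sum hz.
split => hv.
- rewrite -[bound]mulr1 -hsum1; apply: (@gen_bound _ k n p hp z c bound hc hB hcB) => x hx /forallP hA i.
  case: (posnP i) => [i0|ipos].
    have -> : i = ord0 by apply/val_inj.
    have hxz : (z ord0 <= x ord0)%N.
      have hs : (\sum_(j < k) x (lift ord0 j) <= \sum_(j < k) z (lift ord0 j))%N.
        by apply: leq_sum => j _; have /implyP := hA (lift ord0 j); apply.
      move: hx; rewrite -hz !big_ord_recl => e; lia.
    case: (eqVneq (x ord0) (z ord0)) => [->|hne] //.
    have hn : (0 < n)%N by rewrite -hx; apply: leq_trans (le_sum1 x ord0); lia.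
    apply: ler_weXn2l => //.
    rewrite /c ler_pdivlMr ?hmupos // mul1r.
    have hs : \sum_(j < k) ((z (lift ord0 j))%:R : R) <= \sum_(j < k) mu (lift ord0 j).
      by apply: ler_sum => j _; apply: hv.
    move: hsmu hsz; rewrite !big_ord_recl; lra.
  have /implyP /(_ ipos) hxi := hA i.
  case: (eqVneq (x i) (z i)) => [->|hne] //.
  have hn : (0 < n)%N by rewrite -hz; apply: leq_trans (le_sum1 z i); lia.
  apply: ler_wiXn2l => //.
  by rewrite /c ler_pdivrMr ?hmupos // mul1r; apply: hv.
- rewrite -[bound]mulr1 -hsum1; apply: (@gen_bound _ k n p hp z c bound hc hB hcB) => x hx /forallP hA i.
  case: (posnP i) => [i0|ipos].
    have -> : i = ord0 by apply/val_inj.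
    have hxz : (x ord0 <= z ord0)%N.
      have hs : (\sum_(j < k) z (lift ord0 j) <= \sum_(j < k) x (lift ord0 j))%N.
        by apply: leq_sum => j _; have /implyP := hA (lift ord0 j); apply.
      move: hx; rewrite -hz !big_ord_recl => e; lia.
    case: (eqVneq (x ord0) (z ord0)) => [->|hne] //.
    have hn : (0 < n)%N by rewrite -hz; apply: leq_trans (le_sum1 z ord0); lia.
    apply: ler_wiXn2l => //.
    rewrite /c ler_pdivrMr ?hmupos // mul1r.
    have hs : \sum_(j < k) mu (lift ord0 j) <= \sum_(j < k) ((z (lift ord0 j))%:R : R).
      by apply: ler_sum => j _; apply: hv.
    move: hsmu hsz; rewrite !big_ord_recl; lra.
  have /implyP /(_ ipos) hxi := hA i.
  case: (eqVneq (x i) (z i)) => [->|hne] //.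
  have hn : (0 < n)%N by rewrite -hx; apply: leq_trans (le_sum1 x i); lia.
  apply: ler_weXn2l => //.
  by rewrite /c ler_pdivlMr ?hmupos // mul1r; apply: hv.
Qed.
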